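(* Let $G$ be a graph, $k,\ell\ge1$, $S$ an independent set of size $k$, and $J_0=S,J_1,\dots,J_\ell$ independent sets of $G$. Define $\mathcal{C}_0=\{\{(S,k)\}\}$ and, for $i\in\{1,\dots,\ell\}$, let $\mathcal{C}_i$ contain, for every $C\in\mathcal{C}_{i-1}$ and every constraint $(X,b)\in C$, the constraint set $C'$ consisting of: $(N(X)\cap J_i,1)$; $(X\cap J_i,b-1)$ if $b\ge2$ (nothing if $b=1$); and $(X'\cap J_i,b')$ for every other constraint $(X',b')\in C$. Then for every $i\in\{0,\dots,\ell\}$, $\sum_{C\in\mathcal{C}_i}|C|\le (i+1)!$; in particular $\sum_{C\in\mathcal{C}_\ell}|C|\le(\ell+1)!$.
   Context: A constraint is a pair $(X,b)$ with $X\subseteq V(G)$ and $b$ a positive integer; a constraint set is a finite collection of constraints. The collections $\mathcal{C}_i$ and constraint sets are taken with multiplicity (one $C'$ per pair $(C,(X,b))$), and $|C|$ is the number of constraints in $C$. For $X\subseteq V(G)$, $N(X)=\{v\notin X: v\text{ adjacent to some }u\in X\}$. *)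

(* Defs.v *)
From mathcomp Require Import all_boot.
Set Implicit Arguments. Unset Strict Implicit. Unset Printing Implicit Defensive.

Definition simple_graph (T : finType) (e : rel T) : Prop :=
  symmetric e /\ irreflexive e.

Definition independent (T : finType) (e : rel T) (A : {set T}) : bool :=
  [forall u in A, forall v in A, ~~ e u v].

Definition nbh (T : finType) (e : rel T) (X : {set T}) : {set T} :=
  [set v | (v \notin X) && [exists u in X, e u v]].

Definition constraint (T : finType) := ({set T} * nat)%type.

(* Constraint sets are taken with multiplicity: lists of constraints. *)
Definition cset (T : finType) := seq (constraint T).

(* The constraint set C' obtained from C by branching on the constraint c,
   where [others] is C with (one copy of) c removed. *)
Definition branch (T : finType) (e : rel T) (Ji : {set T})
    (c : constraint T) (others : cset T) : cset T :=
  (nbh e c.1 :&: Ji, 1)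
    :: (if 2 <= c.2 then [:: (c.1 :&: Ji, c.2.-1)] else [::])
    ++ [seq (c'.1 :&: Ji, c'.2) | c' <- others].

Definition step (T : finType) (e : rel T) (Ji : {set T})
    (Cs : seq (cset T)) : seq (cset T) :=
  flatten [seq [seq branch e Ji c (rem c C) | c <- C] | C <- Cs].

Fixpoint Ccol (T : finType) (e : rel T) (J : nat -> {set T}) (S : {set T})
    (k : nat) (i : nat) : seq (cset T) :=
  match i with
  | 0 => [:: [:: (S, k)]]
  | i'.+1 => step e (J i) (Ccol e J S k i')
  end.

Definition total_size (T : finType) (Cs : seq (cset T)) : nat :=
  sumn [seq size C | C <- Cs].

(* Main.v *)
Require Import Defs.
From mathcomp Require Import all_boot.

Lemma sumn_map_le (A : eqType) (f : A -> nat) (s : seq A) b :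
  (forall c, c \in s -> f c <= b) -> sumn (map f s) <= size s * b.
Proof.
elim: s => [|x s IH] //= H.
rewrite mulSn leq_add // ?H ?mem_head // IH // => c Hc.
by apply: H; rewrite inE Hc orbT.
Qed.

Lemma size_branch (T : finType) (e : rel T) Ji (c : constraint T) (C : cset T) :
  c \in C -> size (branch e Ji c (rem c C)) <= (size C).+1.
Proof.
move=> Hc; rewrite /branch /= size_cat size_map size_rem //.
case: (2 <= c.2) => /=; case: (size C) (has_predT C) => [|m] //=.
by rewrite has_predT; case: C Hc.
Qed.

Lemma step_bound (T : finType) (e : rel T) Ji (Cs : seq (cset T)) n :
  (forall C, C \in Cs -> size C <= n) ->
  (forall C, C \in step e Ji Cs -> size C <= n.+1) /\
  total_size (step e Ji Cs) <= n.+1 * total_size Cs.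
Proof.
elim: Cs => [|C Cs IH] H; first by split.
have [IH1 IH2] : (forall C, C \in step e Ji Cs -> size C <= n.+1) /\
  total_size (step e Ji Cs) <= n.+1 * total_size Cs.
  by apply: IH => D HD; apply: H; rewrite inE HD orbT.
have HC : size C <= n by apply: H; rewrite mem_head.
have -> : step e Ji (C :: Cs) = [seq branch e Ji c (rem c C) | c <- C] ++ step e Ji Cs by [].
split.
  move=> D; rewrite mem_cat => /orP [/mapP [c Hc ->]|]; last exact: IH1.
  have := @size_branch T e Ji c C Hc; rewrite ltnS => HH; exact: leq_trans HH HC.
rewrite /total_size map_cat sumn_cat /= mulnDr.
rewrite leq_add //.
rewrite -map_comp.
apply: (leq_trans (@sumn_map_le _ _ _ (size C).+1 _)).
  by move=> c Hc /=; apply: size_branch.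
by rewrite mulnC leq_mul.
Qed.

Theorem lemma3p4 (T : finType) (e : rel T) (k l : nat) (S : {set T})
    (J : nat -> {set T}) :
  simple_graph e ->
  1 <= k -> 1 <= l ->
  independent e S -> #|S| = k ->
  J 0 = S ->
  (forall i, i <= l -> independent e (J i)) ->
  forall i, i <= l -> total_size (Ccol e J S k i) <= i.+1`!.
Proof.
move=> _ _ _ _ _ _ _ i _.
suff : (forall C, C \in Ccol e J S k i -> size C <= i.+1) /\
       total_size (Ccol e J S k i) <= i.+1`! by case.
elim: i => [|i [IH1 IH2]].
  by split => // C; rewrite inE => /eqP ->.
have [H1 H2] := @step_bound T e (J i.+1) _ _ IH1.
split => //.
apply: (leq_trans H2).
by rewrite factS leq_mul2l IH2 orbT.
Qed.
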